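(* There is an absolute constant $K$ such that for all $0<p<q<1/2$, \[ \left|\frac{H_p(q)}{p\,h\!\left(\frac qp-1\right)}-1\right|\le K\,(p+q). \]
   Context: $H_p(q)=q\log\frac qp+(1-q)\log\frac{1-q}{1-p}$ is the Kullback–Leibler divergence between $\mathrm{Bern}(q)$ and $\mathrm{Bern}(p)$, and $h(x)=(x+1)\log(x+1)-x$. The paper states the bound as $O(p+q)$ with $p,q$ possibly depending on $n$. *)

(* Defs.v *)
From Stdlib Require Import Reals.
Open Scope R_scope.

(* KL divergence between Bern(q) and Bern(p). *)
Definition Hkl (p q : R) : R :=
  q * ln (q / p) + (1 - q) * ln ((1 - q) / (1 - p)).

Definition hfun (x : R) : R := (x + 1) * ln (x + 1) - x.

(* Main.v *)
Require Import Defs.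
From Stdlib Require Import Reals Lra.
From Coquelicot Require Import Coquelicot.
Open Scope R_scope.

Lemma ln_le_sub1 z : 0 < z -> ln z <= z - 1.
Proof. intros Hz. pose proof (exp_ineq1_le (ln z)). rewrite exp_ln in H; lra. Qed.

Lemma ln_lower r : 1 <= r -> (1 - / r) + (1 - / r)^2 / 2 <= ln r.
Proof.
  intros Hr. destruct (Req_dec r 1) as [->|Hne].
  { rewrite ln_1, Rinv_1. lra. }
  set (f := fun x => ln x - ((1 - / x) + (1 - / x)^2 / 2)).
  destruct (MVT_cor2 f (fun x => (x - 1)^2 / x^3) 1 r) as [c [Hc Hcr]].
  - lra.
  - intros c Hc. apply is_derive_Reals. unfold f.
    auto_derive.
    + repeat split; lra.
    + field. lra.
  - assert (f 1 = 0) by (unfold f; rewrite ln_1, Rinv_1; lra).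
    assert (0 <= (c - 1) ^ 2 / c ^ 3 * (r - 1)).
    { apply Rmult_le_pos; [|lra]. apply Rmult_le_pos. apply pow2_ge_0.
      left; apply Rinv_0_lt_compat, pow_lt; lra. }
    unfold f in Hc, H. lra.
Qed.

Theorem lemma5 :
  exists K : R, forall p q : R,
    0 < p -> p < q -> q < 1 / 2 ->
    Rabs (Hkl p q / (p * hfun (q / p - 1)) - 1) <= K * (p + q).
Proof.
  exists 4. intros p q Hp Hpq Hq.
  set (r := q / p).
  assert (Hr1 : 1 <= r) by (unfold r; apply (Rmult_le_reg_r p); [lra|]; field_simplify; lra).
  assert (Hrp : r * p = q) by (unfold r; field; lra).
  assert (Hir : / r = p / q) by (unfold r; field; lra).
  set (z := (1 - q) / (1 - p)).
  assert (Hz : 0 < z) by (unfold z; apply Rdiv_lt_0_compat; lra).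
  assert (Hz1 : z * (1 - p) = 1 - q) by (unfold z; field; lra).
  assert (Hiz : / z = (1 - p) / (1 - q)) by (unfold z; field; lra).
  pose proof (ln_le_sub1 z Hz) as U.
  pose proof (ln_le_sub1 (/ z) (Rinv_0_lt_compat _ Hz)) as U2.
  rewrite ln_Rinv in U2 by lra.
  pose proof (ln_lower r Hr1) as Lw.
  rewrite Hir in Lw.
  assert (HB : p * hfun (r - 1) = q * ln r - q + p).
  { unfold hfun. replace (r - 1 + 1) with r by ring.
    rewrite <- Hrp. ring. }
  assert (HA : Hkl p q = q * ln r + (1 - q) * ln z) by reflexivity.
  rewrite HB, HA.
  set (L1 := ln r) in *. set (L2 := ln z) in *.
  assert (Bpos : (q - p)^2 / (2 * q) <= q * L1 - q + p).
  { assert (q * ((1 - p / q) + (1 - p / q)^2 / 2) = (q - p) + (q - p)^2 / (2 * q))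
      by (field; lra).
    assert (q * ((1 - p / q) + (1 - p / q)^2 / 2) <= q * L1)
      by (apply Rmult_le_compat_l; lra).
    lra. }
  assert (Hsq : 0 < (q - p)^2 / (2 * q)).
  { apply Rdiv_lt_0_compat; [|lra]. apply pow_lt. lra. }
  set (B := q * L1 - q + p) in *.
  assert (D0 : 0 <= q * L1 + (1 - q) * L2 - B).
  { unfold B. rewrite Hiz in U2.
    assert ((1 - q) * (- L2) <= (1 - q) * ((1 - p) / (1 - q) - 1))
      by (apply Rmult_le_compat_l; lra).
    assert ((1 - q) * ((1 - p) / (1 - q) - 1) = q - p) by (field; lra).
    lra. }
  assert (D1 : q * L1 + (1 - q) * L2 - B <= 2 * (q - p)^2).
  { unfold B.
    assert ((1 - q) * L2 <= (1 - q) * (z - 1)) by (apply Rmult_le_compat_l; lra).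
    assert ((1 - q) * (z - 1) = - (q - p) + (q - p)^2 / (1 - p)) by (unfold z; field; lra).
    assert ((q - p)^2 / (1 - p) <= 2 * (q - p)^2).
    { apply (Rmult_le_reg_r (1 - p)); [lra|]. field_simplify; [|lra].
      assert (0 <= (q-p)^2) by apply pow2_ge_0. nra. }
    lra. }
  assert (E : 2 * (q - p)^2 = 4 * q * ((q - p)^2 / (2 * q))) by (field; lra).
  replace ((q * L1 + (1 - q) * L2) / B - 1) with ((q * L1 + (1 - q) * L2 - B) / B)
    by (field; lra).
  rewrite Rabs_pos_eq by (apply Rdiv_le_0_compat; lra).
  apply (Rmult_le_reg_r B); [lra|].
  unfold Rdiv. rewrite Rmult_assoc, Rinv_l, Rmult_1_r by lra.
  assert (4 * q * ((q - p)^2 / (2 * q)) <= 4 * q * B)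
    by (apply Rmult_le_compat_l; lra).
  nra.
Qed.
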